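(* Let $a\in(0,1)$, $b>0$, and $p_0=a/(2b+1)$. Define for $t\in(0,1)$ \[ Q_{p_0}(t)=\frac{(1-t)^{-p_0}F(a,b;2b+1;t)}{F(a,b+1;2b+1;t)}. \] If $a-b>1/2$ then $Q_{p_0}$ is strictly decreasing on $(0,1)$; if $a-b<1/2$ then $Q_{p_0}$ is strictly increasing on $(0,1)$; if $a-b=1/2$ then $Q_{p_0}\equiv1$. Consequently, for all $t\in(0,1)$, \[ F(a,b;2b+1;t)<(1-t)^{p_0}F(a,b+1;2b+1;t)\ \text{ if } a-b>1/2, \] and the reverse strict inequality holds for all $t\in(0,1)$ if $a-b<1/2$.
   Context: For real $a,b,c$ with $c\notin\{0,-1,-2,\dots\}$, $F(a,b;c;x)=\sum_{n\ge0}\frac{(a)_n(b)_n}{(c)_n}\frac{x^n}{n!}$ for $x\in(-1,1)$, where $(a)_0=1$ and $(a)_n=a(a+1)\cdots(a+n-1)$. *)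

(* Defs.v *)
From Stdlib Require Import Reals Factorial.
From Coquelicot Require Import Coquelicot.
Open Scope R_scope.

Fixpoint poch (a : R) (n : nat) : R :=
  match n with
  | O => 1
  | S k => poch a k * (a + INR k)
  end.

(* Gauss hypergeometric series F(a,b;c;x) = sum_n (a)_n (b)_n / (c)_n x^n / n!.
   (Coquelicot's Series is the sum of the series; the series converges for
   x in (-1,1) when c is not a non-positive integer.) *)
Definition hypF (a b c x : R) : R :=
  Series (fun n => poch a n * poch b n / poch c n * x ^ n / INR (fact n)).

Definition p0 (a b : R) : R := a / (2 * b + 1).

Definition Qp0 (a b t : R) : R :=
  Rpower (1 - t) (- p0 a b) * hypF a b (2 * b + 1) t / hypF a (b + 1) (2 * b + 1) t.

(* Main.v *)
Require Import Defs.
From Stdlib Require Import Reals Lra Lia Factorial.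
From Coquelicot Require Import Coquelicot.
Open Scope R_scope.


Definition hc (a b c : R) (n : nat) : R :=
  poch a n * poch b n / poch c n / INR (fact n).

Lemma hypF_PS a b c x : hypF a b c x = PSeries (hc a b c) x.
Proof.
  unfold hypF, PSeries, hc. apply Series_ext; intro n. unfold Rdiv; ring.
Qed.

Lemma poch_pos x n : 0 < x -> 0 < poch x n.
Proof.
  intro hx; induction n as [|n IH]; simpl; [lra|].
  apply Rmult_lt_0_compat; auto. pose proof (pos_INR n); lra.
Qed.

Lemma poch_le x y n : 0 < x -> x <= y -> poch x n <= poch y n.
Proof.
  intros hx hxy; induction n as [|n IH]; simpl; [lra|].
  pose proof (pos_INR n). pose proof (poch_pos x n hx).
  apply Rmult_le_compat; lra.
Qed.

Lemma poch_1 n : poch 1 n = INR (fact n).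
Proof.
  induction n as [|n IH]; simpl poch; [simpl; lra|].
  rewrite IH. rewrite fact_simpl, mult_INR, S_INR. ring.
Qed.

Lemma poch_shift x n : x * poch (x + 1) n = poch x n * (x + INR n).
Proof.
  induction n as [|n IH]; simpl poch; [simpl; ring|].
  replace (x * (poch (x + 1) n * (x + 1 + INR n))) with (x * poch (x + 1) n * (x + 1 + INR n)) by ring.
  rewrite IH, S_INR. ring.
Qed.

Lemma hc_pos a b c n : 0 < a -> 0 < b -> 0 < c -> 0 < hc a b c n.
Proof.
  intros. unfold hc. pose proof (poch_pos a n H). pose proof (poch_pos b n H0).
  pose proof (poch_pos c n H1). pose proof (INR_fact_lt_0 n).
  apply Rdiv_lt_0_compat; [apply Rdiv_lt_0_compat|]; auto. apply Rmult_lt_0_compat; auto.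
Qed.

Lemma hc_le1 a b c n : 0 < a <= 1 -> 0 < b <= c -> hc a b c n <= 1.
Proof.
  intros [ha ha1] [hb hbc]. unfold hc.
  pose proof (poch_le a 1 n ha ha1). pose proof (poch_le b c n hb hbc).
  pose proof (poch_pos a n ha). pose proof (poch_pos b n hb).
  pose proof (poch_pos c n ltac:(lra)). pose proof (INR_fact_lt_0 n).
  rewrite poch_1 in H.
  assert (Hm : poch a n * poch b n <= INR (fact n) * poch c n) by (apply Rmult_le_compat; lra).
  apply (Rmult_le_reg_r (INR (fact n) * poch c n)); [apply Rmult_lt_0_compat; lra|].
  replace (poch a n * poch b n / poch c n / INR (fact n) * (INR (fact n) * poch c n))
    with (poch a n * poch b n) by (field; lra). lra.
Qed.

Lemma radius_ge1 a b c : 0 < a <= 1 -> 0 < b <= c -> Rbar_le 1 (CV_radius (hc a b c)).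
Proof.
  intros H1 H2. destruct (CV_radius_bounded (hc a b c)) as [Hub _].
  apply Hub. exists 1. intro n. rewrite pow1, Rmult_1_r.
  pose proof (hc_pos a b c n ltac:(lra) ltac:(lra) ltac:(lra)).
  pose proof (hc_le1 a b c n H1 H2). rewrite Rabs_pos_eq; lra.
Qed.

Lemma inside a b c x : 0 < a <= 1 -> 0 < b <= c -> Rabs x < 1 ->
  Rbar_lt (Rabs x) (CV_radius (hc a b c)).
Proof.
  intros H1 H2 H3. eapply Rbar_lt_le_trans; [|apply radius_ge1; eauto]. simpl; auto.
Qed.

Lemma hcG a b c n : 0 < b -> b * hc a (b+1) c n = hc a b c n * (b + INR n).
Proof.
  intro hb. unfold hc. 
  replace (b * (poch a n * poch (b + 1) n / poch c n / INR (fact n)))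
    with (poch a n * (b * poch (b + 1) n) / poch c n / INR (fact n)) by (unfold Rdiv; ring).
  rewrite poch_shift. unfold Rdiv; ring.
Qed.

Lemma hc0 a b c : hc a b c 0 = 1.
Proof. unfold hc; simpl; field. Qed.

Lemma I2coef a b k : 0 < b ->
  (INR k + 1) * (hc a (b+1) (2*b+1) (S k) + hc a b (2*b+1) (S k)) = (a + INR k) * hc a (b+1) (2*b+1) k.
Proof.
  intro hb. pose proof (poch_shift b k) as Hs.
  assert (HB1 : poch (b+1) k = poch b k * (b + INR k) / b) by (rewrite <- Hs; field; lra).
  pose proof (poch_pos (2*b+1) k ltac:(lra)). pose proof (INR_fact_lt_0 k).
  pose proof (pos_INR k).
  unfold hc. simpl poch. rewrite fact_simpl, mult_INR, S_INR. rewrite HB1.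
  field. repeat split; try lra.
Qed.

Lemma PS_lin (u v w : nat -> R) (al be x : R) :
  ex_pseries u x -> ex_pseries v x -> (forall n, w n = al * u n + be * v n) ->
  PSeries w x = al * PSeries u x + be * PSeries v x /\ ex_pseries w x.
Proof.
  intros hu hv hw.
  assert (E : forall n, w n = PS_plus (PS_scal al u) (PS_scal be v) n).
  { intro n. rewrite hw. reflexivity. }
  assert (ha : ex_pseries (PS_scal al u) x) by (apply ex_pseries_scal; auto; apply Rmult_comm).
  assert (hb : ex_pseries (PS_scal be v) x) by (apply ex_pseries_scal; auto; apply Rmult_comm).
  split.
  - rewrite (PSeries_ext _ _ x E). rewrite PSeries_plus; auto. rewrite !PSeries_scal. reflexivity.
  - apply (ex_pseries_ext (PS_plus (PS_scal al u) (PS_scal be v))).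
    + intro n; rewrite E; reflexivity.
    + apply ex_pseries_plus; auto.
Qed.

Lemma incr_derive (u : nat -> R) n : PS_incr_1 (PS_derive u) n = INR n * u n.
Proof. destruct n; simpl; [unfold zero; simpl; ring| reflexivity]. Qed.

Lemma exF a b x : 0 < a < 1 -> 0 < b -> Rabs x < 1 -> ex_pseries (hc a b (2*b+1)) x.
Proof. intros. apply CV_radius_inside, inside; auto; lra. Qed.
Lemma exG a b x : 0 < a < 1 -> 0 < b -> Rabs x < 1 -> ex_pseries (hc a (b+1) (2*b+1)) x.
Proof. intros. apply CV_radius_inside, inside; auto; lra. Qed.

Lemma Rel1 a b x : 0 < a < 1 -> 0 < b -> Rabs x < 1 ->
  x * PSeries (PS_derive (hc a b (2*b+1))) x
  = b * (PSeries (hc a (b+1) (2*b+1)) x - PSeries (hc a b (2*b+1)) x).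
Proof.
  intros ha hb hx. rewrite <- PSeries_incr_1.
  destruct (PS_lin (hc a (b+1) (2*b+1)) (hc a b (2*b+1)) (PS_incr_1 (PS_derive (hc a b (2*b+1)))) b (-b) x)
    as [E _]; [apply exG; auto| apply exF; auto| |].
  - intro n. rewrite incr_derive. pose proof (hcG a b (2*b+1) n hb). lra.
  - rewrite E; ring.
Qed.

Lemma Rel2 a b x : 0 < a < 1 -> 0 < b -> Rabs x < 1 ->
  x * (1 - x) * PSeries (PS_derive (hc a (b+1) (2*b+1))) x
  = b * PSeries (hc a b (2*b+1)) x + (a * x - b) * PSeries (hc a (b+1) (2*b+1)) x.
Proof.
  intros ha hb hx.
  set (F := hc a b (2*b+1)). set (G := hc a (b+1) (2*b+1)).
  set (K := PS_incr_1 (PS_derive G)).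
  assert (hK : ex_pseries K x).
  { apply ex_pseries_incr_1, ex_pseries_derive, inside; auto; lra. }
  assert (E1 : x * PSeries (PS_derive G) x = PSeries K x) by (unfold K; rewrite PSeries_incr_1; auto).
  assert (E2 : x * PSeries K x = PSeries (PS_incr_1 K) x) by (rewrite PSeries_incr_1; auto).
  destruct (PS_lin F G (fun n => b * F n - b * G n) b (-b) x) as [E3 h3];
    [apply exF; auto| apply exG; auto| intro n; ring|].
  destruct (PS_lin _ _ (fun n => b * F n - b * G n + a * PS_incr_1 G n) 1 a x h3
    (ex_pseries_incr_1 _ _ (exG a b x ha hb hx))) as [E4 _]; [intro n; unfold F, G; ring|].
  fold G in E4.
  destruct (PS_lin K (PS_incr_1 K) (fun n => K n - PS_incr_1 K n) 1 (-1) x hK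
    (ex_pseries_incr_1 _ _ hK)) as [E5 _]; [intro n; ring|].
  replace (x * (1 - x) * PSeries (PS_derive G) x) with (PSeries K x - PSeries (PS_incr_1 K) x)
    by (rewrite <- E2, <- E1; ring).
  replace (b * PSeries F x + (a * x - b) * PSeries G x)
     with (1 * PSeries (fun n : nat => b * F n - b * G n) x + a * PSeries (PS_incr_1 G) x)
     by (rewrite E3, PSeries_incr_1; ring).
  rewrite <- E4.
  replace (PSeries K x - PSeries (PS_incr_1 K) x) with (1 * PSeries K x + -1 * PSeries (PS_incr_1 K) x) by ring.
  rewrite <- E5. apply PSeries_ext. intro n.
  unfold K. destruct n as [|k].
  - simpl. unfold zero; simpl. unfold F, G. rewrite !hc0. ring.
  - change (PS_incr_1 (PS_incr_1 (PS_derive G)) (S k)) with (PS_incr_1 (PS_derive G) k).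
    change (PS_incr_1 G (S k)) with (G k).
    rewrite !incr_derive.
    pose proof (hcG a b (2*b+1) (S k) hb). pose proof (I2coef a b k hb).
    fold F G in H, H0. rewrite S_INR in *. nra.
Qed.

Lemma left_smaller (phi : R -> R) x l d : is_derive phi x l -> 0 < l -> 0 < d ->
  exists s, x - d < s < x /\ phi s < phi x.
Proof.
  intros H hl hd. apply is_derive_Reals in H.
  destruct (H (l/2) ltac:(lra)) as [del Hdel].
  pose proof (cond_pos del) as hdel.
  set (h := - (Rmin del d) / 2).
  assert (hm1 : Rmin del d <= del) by apply Rmin_l.
  assert (hm2 : Rmin del d <= d) by apply Rmin_r.
  assert (hm3 : 0 < Rmin del d) by (apply Rmin_pos; lra).
  assert (hh : h < 0) by (unfold h; lra).
  specialize (Hdel h ltac:(lra)).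
  assert (Rabs h < del) by (rewrite Rabs_left; unfold h; lra).
  specialize (Hdel H0).
  exists (x + h). split; [unfold h; lra|].
  apply Rabs_def2 in Hdel. destruct Hdel as [_ Hd].
  assert (Hq : 0 < (phi (x + h) - phi x) / h) by lra.
  assert (Hq2 : (phi (x + h) - phi x) / h * h = phi (x+h) - phi x) by (field; lra).
  nra.
Qed.

Lemma is_derive_eq (f : R -> R) x l l' : is_derive f x l -> l = l' -> is_derive f x l'.
Proof. intros H e; subst; exact H. Qed.

Lemma deriv_mult (f g : R -> R) x df dg : is_derive f x df -> is_derive g x dg ->
  is_derive (fun t => f t * g t) x (df * g x + f x * dg).
Proof. intros H1 H2. apply (is_derive_mult f g x df dg H1 H2). intros; apply Rmult_comm. Qed.

Lemma cont_of_der (w : R -> R) x l : is_derive w x l -> continuity_pt w x.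
Proof.
  intro H. apply is_derive_Reals in H. apply derivable_continuous_pt. exists l. exact H.
Qed.

Lemma minlemma (w w' : R -> R) al be : al < be ->
  (forall t, al <= t <= be -> is_derive w t (w' t)) ->
  (forall t, al < t <= be -> w t < 0 -> 0 < w' t) ->
  0 <= w al -> 0 <= w be.
Proof.
  intros hab Hd Hs H0.
  destruct (Rle_or_lt 0 (w be)) as [h|h]; [exact h|exfalso].
  destruct (continuity_ab_min w al be ltac:(lra)) as [m [Hm1 Hm2]].
  { intros c hc. apply (cont_of_der w c (w' c)). apply Hd; auto. }
  assert (wm : w m <= w be) by (apply Hm1; lra).
  assert (ma : m <> al) by (intro e; subst; lra).
  assert (hpos : 0 < w' m) by (apply Hs; [lra|lra]).
  destruct (left_smaller w m (w' m) (m - al) (Hd m Hm2) hpos ltac:(lra)) as [s [hs1 hs2]].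
  assert (w m <= w s) by (apply Hm1; lra). lra.
Qed.

Lemma barrier (phi phi' A B : R -> R) :
  (forall t, 0 <= t < 1 -> is_derive phi t (phi' t)) ->
  phi 0 = 0 ->
  (forall t, 0 < t < 1 -> phi' t = A t * phi t + B t) ->
  (forall t, 0 < t < 1 -> 0 <= B t) ->
  (forall t, 0 < t < 1 -> ex_derive A t) ->
  (exists e, 0 < e < 1 /\ forall t, 0 < t < e -> A t < 0) ->
  forall t, 0 < t < 1 -> 0 <= phi t.
Proof.
  intros Hd H0 Hode HB HA [e [he HAe]].
  assert (step1 : forall t, 0 < t < e -> 0 <= phi t).
  { intros t ht. apply (minlemma phi phi' 0 t); try lra.
    - intros s hs; apply Hd; lra.
    - intros s hs hneg. rewrite Hode by lra.
      pose proof (HAe s ltac:(lra)). pose proof (HB s ltac:(lra)). nra. }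
  intros t ht.
  destruct (Rlt_or_le t e) as [hte|hte]; [apply step1; lra|].
  set (d := e / 2).
  destruct (continuity_ab_maj A d t ltac:(unfold d; lra)) as [M [HM1 HM2]].
  { intros c hc. destruct (HA c ltac:(unfold d in hc; lra)) as [l hl]. exact (cont_of_der A c l hl). }
  set (K := A M + 1).
  set (w := fun s => phi s * exp (- K * s)).
  assert (Hw : forall s, d <= s <= t -> is_derive w s ((phi' s - K * phi s) * exp (- K * s))).
  { intros s hs. unfold w.
    assert (hd : is_derive phi s (phi' s)) by (apply Hd; unfold d in hs; lra).
    evar (l : R).
    assert (He : is_derive (fun s => exp (- K * s)) s l).
    { unfold l. auto_derive; [exact I|reflexivity]. }
    unfold l in He.
    apply (is_derive_eq _ _ _ _ (deriv_mult phi (fun s => exp (- K * s)) s _ _ hd He)). simpl; ring. }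
  assert (Hw0 : 0 <= w d) by (unfold w; pose proof (exp_pos (- K * d)); pose proof (step1 d ltac:(unfold d; lra)); nra).
  destruct (Rle_lt_or_eq_dec d t ltac:(unfold d; lra)) as [hdt|hdt]; [|subst; apply step1; unfold d; lra].
  pose proof (minlemma w _ d t hdt Hw) as Hm.
  assert (Hwt : 0 <= w t).
  { apply Hm; auto. intros s hs hneg. unfold w in hneg.
    pose proof (exp_pos (- K * s)).
    assert (phi s < 0) by (destruct (Rle_or_lt 0 (phi s)); [nra|auto]).
    rewrite Hode by (unfold d in hs; lra).
    pose proof (HM1 s ltac:(lra)). pose proof (HB s ltac:(unfold d in hs; lra)).
    apply Rmult_lt_0_compat; [|auto]. unfold K; nra. }
  unfold w in Hwt. pose proof (exp_pos (- K * t)).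
  destruct (Rle_or_lt 0 (phi t)); [auto|nra].
Qed.

Lemma barrier_strict (phi phi' A B : R -> R) :
  (forall t, 0 <= t < 1 -> is_derive phi t (phi' t)) ->
  phi 0 = 0 ->
  (forall t, 0 < t < 1 -> phi' t = A t * phi t + B t) ->
  (forall t, 0 < t < 1 -> 0 < B t) ->
  (forall t, 0 < t < 1 -> ex_derive A t) ->
  (exists e, 0 < e < 1 /\ forall t, 0 < t < e -> A t < 0) ->
  forall t, 0 < t < 1 -> 0 < phi t.
Proof.
  intros Hd H0 Hode HB HA He.
  assert (Hge : forall t, 0 < t < 1 -> 0 <= phi t).
  { apply (barrier phi phi' A B); auto. intros t ht; left; auto. }
  intros t ht. destruct (Hge t ht) as [h|h]; [auto|exfalso].
  assert (hp : 0 < phi' t) by (rewrite Hode by auto; rewrite <- h; rewrite Rmult_0_r, Rplus_0_l; auto).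
  destruct (left_smaller phi t (phi' t) t (Hd t ltac:(lra)) hp ltac:(lra)) as [s [hs1 hs2]].
  pose proof (Hge s ltac:(lra)). lra.
Qed.

Lemma mono_dec (Q Q' : R -> R) s t : s < t ->
  (forall c, s <= c <= t -> is_derive Q c (Q' c)) ->
  (forall c, s < c < t -> Q' c < 0) -> Q t < Q s.
Proof.
  intros hst Hd Hn.
  destruct (MVT_cor2 Q Q' s t hst) as [c [Hc1 Hc2]].
  { intros c hc. apply is_derive_Reals. auto. }
  pose proof (Hn c Hc2). nra.
Qed.

Lemma mono_const (Q Q' : R -> R) s t : s < t ->
  (forall c, s <= c <= t -> is_derive Q c (Q' c)) ->
  (forall c, s < c < t -> Q' c = 0) -> Q t = Q s.
Proof.
  intros hst Hd Hn.
  destruct (MVT_cor2 Q Q' s t hst) as [c [Hc1 Hc2]].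
  { intros c hc. apply is_derive_Reals. auto. }
  rewrite (Hn c Hc2) in Hc1. lra.
Qed.

Definition ff a b t := PSeries (hc a b (2*b+1)) t.
Definition gg a b t := PSeries (hc a (b+1) (2*b+1)) t.
Definition ff' a b t := PSeries (PS_derive (hc a b (2*b+1))) t.
Definition gg' a b t := PSeries (PS_derive (hc a (b+1) (2*b+1))) t.

Lemma Series_zero : Series (fun _ => 0) = 0.
Proof. transitivity (PSeries (fun _ => 0) 0); [|apply PSeries_const_0]. unfold PSeries. apply Series_ext; intro; ring. Qed.

Lemma PS_ge1 (u : nat -> R) t : u 0%nat = 1 -> (forall n, 0 < u n) -> 0 <= t -> ex_pseries u t ->
  1 <= PSeries u t.
Proof.
  intros h0 hpos ht hex. apply ex_pseries_R in hex. unfold PSeries.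
  rewrite Series_incr_1 by auto. rewrite h0, pow_O, Rmult_1_r.
  assert (0 <= Series (fun k => u (S k) * t ^ S k)).
  { rewrite <- Series_zero. apply Series_le.
    - intro n. split; [lra|]. apply Rmult_le_pos; [left; auto| apply pow_le; auto].
    - apply (ex_series_incr_1 (fun k => u k * t ^ k)). auto. }
  lra.
Qed.

Lemma ff_ge1 a b t : 0 < a < 1 -> 0 < b -> 0 <= t < 1 -> 1 <= ff a b t.
Proof.
  intros. apply PS_ge1; auto. apply hc0. intro; apply hc_pos; lra. lra.
  apply exF; auto. rewrite Rabs_pos_eq; lra.
Qed.
Lemma gg_ge1 a b t : 0 < a < 1 -> 0 < b -> 0 <= t < 1 -> 1 <= gg a b t.
Proof.
  intros. apply PS_ge1; auto. apply hc0. intro; apply hc_pos; lra. lra.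
  apply exG; auto. rewrite Rabs_pos_eq; lra.
Qed.

Lemma ff_der a b t : 0 < a < 1 -> 0 < b -> Rabs t < 1 -> is_derive (ff a b) t (ff' a b t).
Proof. intros. apply is_derive_PSeries, inside; auto; lra. Qed.
Lemma gg_der a b t : 0 < a < 1 -> 0 < b -> Rabs t < 1 -> is_derive (gg a b) t (gg' a b t).
Proof. intros. apply is_derive_PSeries, inside; auto; lra. Qed.

Definition rr a b t := ff a b t / gg a b t.
Definition rr' a b t := (ff' a b t * gg a b t - ff a b t * gg' a b t) / (gg a b t) ^ 2.

Lemma rr_der a b t : 0 < a < 1 -> 0 < b -> 0 <= t < 1 -> is_derive (rr a b) t (rr' a b t).
Proof.
  intros. assert (Rabs t < 1) by (rewrite Rabs_pos_eq; lra).
  apply (is_derive_div (ff a b) (gg a b)); [apply ff_der| apply gg_der|]; auto.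
  pose proof (gg_ge1 a b t); lra.
Qed.

Lemma riccati a b t : 0 < a < 1 -> 0 < b -> 0 < t < 1 ->
  t * (1 - t) * rr' a b t = b * (1 - t) + (b - a) * t * rr a b t - b * (rr a b t) ^ 2.
Proof.
  intros ha hb ht. assert (hx : Rabs t < 1) by (rewrite Rabs_pos_eq; lra).
  pose proof (Rel1 a b t ha hb hx) as R1. pose proof (Rel2 a b t ha hb hx) as R2.
  fold (ff' a b t) (gg a b t) (ff a b t) in R1. fold (gg' a b t) (gg a b t) (ff a b t) in R2.
  pose proof (gg_ge1 a b t ha hb ltac:(lra)).
  assert (E1 : ff' a b t = b * (gg a b t - ff a b t) / t) by (rewrite <- R1; field; lra).
  assert (E2 : gg' a b t = (b * ff a b t + (a * t - b) * gg a b t) / (t * (1 - t)))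
    by (rewrite <- R2; field; lra).
  unfold rr', rr. rewrite E1, E2. field. lra.
Qed.

Definition pp a b := a / (2 * b + 1).
Definition DD a b t := 1 - (1 - pp a b) * t.
Definition hh a b t := (1 - t) / DD a b t.
Definition hh' a b t := - pp a b / (DD a b t) ^ 2.

Lemma pp_bounds a b : 0 < a < 1 -> 0 < b -> 0 < pp a b < 1.
Proof.
  intros. unfold pp. split; [apply Rdiv_lt_0_compat; lra|].
  apply (Rmult_lt_reg_r (2*b+1)); [lra|]. field_simplify; lra.
Qed.

Lemma DD_bounds a b t : 0 < a < 1 -> 0 < b -> 0 <= t < 1 -> 0 < DD a b t <= 1.
Proof. intros. pose proof (pp_bounds a b H H0). unfold DD. nra. Qed.

Lemma hh_der a b t : 0 < a < 1 -> 0 < b -> 0 <= t < 1 -> is_derive (hh a b) t (hh' a b t).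
Proof.
  intros. pose proof (DD_bounds a b t H H0 H1). unfold hh, hh', DD in *.
  auto_derive; [lra|]. field. lra.
Qed.

Lemma hh_ge a b t : 0 < a < 1 -> 0 < b -> 0 <= t < 1 -> 1 - t <= hh a b t.
Proof.
  intros. pose proof (DD_bounds a b t H H0 H1). unfold hh.
  apply (Rmult_le_reg_r (DD a b t)); [lra|]. field_simplify; nra.
Qed.

Definition sg a b t := rr a b t - hh a b t.
Definition sg' a b t := rr' a b t - hh' a b t.
Definition AA a b t := ((b - a) * t - b * (rr a b t + hh a b t)) / (t * (1 - t)).
Definition BB a b t := t * pp a b * (1 - pp a b) * (b + 1) / (DD a b t) ^ 2.

Lemma sg_der a b t : 0 < a < 1 -> 0 < b -> 0 <= t < 1 -> is_derive (sg a b) t (sg' a b t).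
Proof. intros. apply (is_derive_minus (rr a b) (hh a b)); [apply rr_der|apply hh_der]; auto. Qed.

Lemma sg_ode a b t : 0 < a < 1 -> 0 < b -> 0 < t < 1 ->
  sg' a b t = AA a b t * sg a b t + BB a b t.
Proof.
  intros ha hb ht. pose proof (riccati a b t ha hb ht) as Ric.
  pose proof (DD_bounds a b t ha hb ltac:(lra)).
  assert (E : rr' a b t = (b * (1 - t) + (b - a) * t * rr a b t - b * (rr a b t) ^ 2) / (t * (1 - t)))
    by (rewrite <- Ric; field; lra).
  unfold sg', sg, AA, BB, hh', hh. rewrite E. unfold DD in *. unfold pp in *.
  field. split; [lra|]. split; [nra|]. lra.
Qed.

Lemma rr0 a b : rr a b 0 = 1.
Proof. unfold rr, ff, gg. rewrite !PSeries_0, !hc0. field. Qed.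

Lemma rr_pos a b t : 0 < a < 1 -> 0 < b -> 0 <= t < 1 -> 0 < rr a b t.
Proof.
  intros. unfold rr. pose proof (ff_ge1 a b t H H0 H1). pose proof (gg_ge1 a b t H H0 H1).
  apply Rdiv_lt_0_compat; lra.
Qed.

Lemma rr_ex a b t : 0 < a < 1 -> 0 < b -> 0 <= t < 1 -> ex_derive (rr a b) t.
Proof. intros. exists (rr' a b t). apply rr_der; auto. Qed.
Lemma hh_ex a b t : 0 < a < 1 -> 0 < b -> 0 <= t < 1 -> ex_derive (hh a b) t.
Proof. intros. exists (hh' a b t). apply hh_der; auto. Qed.

Lemma sg_pos a b t : 0 < a < 1 -> 0 < b -> 0 < t < 1 -> 0 < sg a b t.
Proof.
  intros ha hb ht. revert t ht. apply (barrier_strict (sg a b) (sg' a b) (AA a b) (BB a b)).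
  - intros; apply sg_der; auto.
  - unfold sg, hh, DD. rewrite rr0. field.
  - intros; apply sg_ode; auto.
  - intros t ht. pose proof (DD_bounds a b t ha hb ltac:(lra)). pose proof (pp_bounds a b ha hb).
    unfold BB. apply Rdiv_lt_0_compat; [|apply pow_lt; lra].
    assert (0 < t*pp a b) by nra. assert (0 < t*pp a b*(1-pp a b)) by nra. nra.
  - intros t ht. unfold AA. auto_derive.
    split; [apply rr_ex; auto; lra|]. split; [apply hh_ex; auto; lra|]. split; [nra|exact I].
  - exists (1/2). split; [lra|]. intros t ht.
    pose proof (rr_pos a b t ha hb ltac:(lra)). pose proof (hh_ge a b t ha hb ltac:(lra)).
    assert (0 < /(t*(1-t))) by (apply Rinv_0_lt_compat; nra).
    assert ((b - a) * t - b * (rr a b t + hh a b t) < 0) by nra.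
    unfold AA, Rdiv; nra.
Qed.

Definition ps a b t := b * (1 - t) + b * (1 - 2 * pp a b) * t * rr a b t - b * (rr a b t) ^ 2.
Definition ps' a b t := - b + b * (1 - 2 * pp a b) * rr a b t + b * (1 - 2 * pp a b) * t * rr' a b t
   - 2 * b * rr a b t * rr' a b t.
Definition AA2 a b t := (b * (1 - 2 * pp a b) * t - 2 * b * rr a b t - 2 * pp a b * t) / (t * (1 - t)).
Definition BB2 a b t := (2 * pp a b - 1) * b * ((1 - t) - rr a b t * DD a b t) / (1 - t).

Lemma ps_der a b t : 0 < a < 1 -> 0 < b -> 0 <= t < 1 -> is_derive (ps a b) t (ps' a b t).
Proof.
  intros. pose proof (rr_der a b t H H0 H1) as Hr.
  unfold ps. auto_derive.
  - repeat split; try (exists (rr' a b t); exact Hr).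
  - replace (Derive (fun x : R => rr a b x) t) with (rr' a b t) by (symmetry; apply is_derive_unique; exact Hr). unfold ps'. ring.
Qed.

Lemma ps_ode a b t : 0 < a < 1 -> 0 < b -> 0 < t < 1 ->
  ps' a b t = AA2 a b t * ps a b t + BB2 a b t.
Proof.
  intros ha hb ht. pose proof (riccati a b t ha hb ht) as Ric.
  assert (E : rr' a b t = (b * (1 - t) + (b - a) * t * rr a b t - b * (rr a b t) ^ 2) / (t * (1 - t)))
    by (rewrite <- Ric; field; lra).
  unfold ps', ps, AA2, BB2. rewrite E. unfold DD, pp.
  field. split; [lra|]. split; lra.
Qed.

Lemma ps0 a b : ps a b 0 = 0.
Proof. unfold ps. rewrite rr0. ring. Qed.

Definition QQ a b t := exp (- pp a b * ln (1 - t)) * rr a b t.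
Definition QQ' a b t := exp (- pp a b * ln (1 - t)) * (pp a b / (1 - t) * rr a b t + rr' a b t).

Lemma Qp0_QQ a b t : Qp0 a b t = QQ a b t.
Proof.
  unfold Qp0, QQ, Rpower, p0, pp, rr, ff, gg. rewrite !hypF_PS. unfold Rdiv. ring.
Qed.

Lemma QQ_der a b t : 0 < a < 1 -> 0 < b -> 0 <= t < 1 -> is_derive (QQ a b) t (QQ' a b t).
Proof.
  intros. pose proof (rr_der a b t H H0 H1) as Hr.
  unfold QQ. auto_derive.
  - repeat split; try (exists (rr' a b t); exact Hr); lra.
  - replace (Derive (fun x : R => rr a b x) t) with (rr' a b t) by (symmetry; apply is_derive_unique; exact Hr). unfold QQ'. simpl. replace (1 + - t) with (1 - t) by ring. field. lra.
Qed.

Lemma QQ'_eq a b t : 0 < a < 1 -> 0 < b -> 0 < t < 1 ->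
  QQ' a b t = exp (- pp a b * ln (1 - t)) * (ps a b t / (t * (1 - t))).
Proof.
  intros ha hb ht. pose proof (riccati a b t ha hb ht) as Ric.
  assert (E : rr' a b t = (b * (1 - t) + (b - a) * t * rr a b t - b * (rr a b t) ^ 2) / (t * (1 - t)))
    by (rewrite <- Ric; field; lra).
  unfold QQ', ps. rewrite E. unfold pp. field. split; [lra|]. split; lra.
Qed.

Lemma QQ0 a b : QQ a b 0 = 1.
Proof. unfold QQ. rewrite rr0, Rminus_0_r, ln_1, Rmult_0_r, exp_0. ring. Qed.

Lemma AA2_ex a b t : 0 < a < 1 -> 0 < b -> 0 < t < 1 -> ex_derive (AA2 a b) t.
Proof.
  intros. unfold AA2. auto_derive.
  repeat split; try (apply rr_ex; auto; lra). nra.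
Qed.

Lemma AA2_neg a b : 0 < a < 1 -> 0 < b ->
  exists e, 0 < e < 1 /\ forall t, 0 < t < e -> AA2 a b t < 0.
Proof.
  intros ha hb. exists (1/2). split; [lra|]. intros t ht.
  pose proof (sg_pos a b t ha hb ltac:(lra)). pose proof (hh_ge a b t ha hb ltac:(lra)).
  pose proof (pp_bounds a b ha hb). unfold sg in *.
  assert (0 < /(t*(1-t))) by (apply Rinv_0_lt_compat; nra).
  assert (0 < b * pp a b * t) by (apply Rmult_lt_0_compat; [apply Rmult_lt_0_compat|]; lra).
  assert (b * (1 - 2 * pp a b) * t - 2 * b * rr a b t - 2 * pp a b * t < 0) by nra.
  unfold AA2, Rdiv; nra.
Qed.

Lemma S_neg a b t : 0 < a < 1 -> 0 < b -> 0 < t < 1 -> (1 - t) - rr a b t * DD a b t < 0.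
Proof.
  intros ha hb ht. pose proof (sg_pos a b t ha hb ht). pose proof (DD_bounds a b t ha hb ltac:(lra)).
  unfold sg, hh in H.
  assert (rr a b t * DD a b t - (1 - t) = (rr a b t - (1 - t) / DD a b t) * DD a b t) by (field; lra).
  nra.
Qed.

Lemma BB2_sign a b t : 0 < a < 1 -> 0 < b -> 0 < t < 1 ->
  (pp a b > 1/2 -> BB2 a b t < 0) /\ (pp a b < 1/2 -> 0 < BB2 a b t) /\ (pp a b = 1/2 -> BB2 a b t = 0).
Proof.
  intros ha hb ht. pose proof (S_neg a b t ha hb ht).
  assert (0 < /(1-t)) by (apply Rinv_0_lt_compat; lra).
  unfold BB2, Rdiv. set (S := 1 - t - rr a b t * DD a b t) in *. set (X := (2 * pp a b - 1) * b). split; [|split].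
  - intro. assert (0 < X) by (unfold X; apply Rmult_lt_0_compat; lra).
    assert (X * S < 0) by nra. nra.
  - intro. assert (X < 0) by (unfold X; nra).
    assert (0 < X * S) by nra. nra.
  - intro e. unfold X. rewrite e. replace (2 * (1 * / 2) - 1) with 0 by field. ring.
Qed.

Lemma ps_opp_der a b t : 0 < a < 1 -> 0 < b -> 0 <= t < 1 ->
  is_derive (fun t => - ps a b t) t (- ps' a b t).
Proof. intros. apply (is_derive_opp (ps a b)). apply ps_der; auto. Qed.

Lemma ps_sign a b t : 0 < a < 1 -> 0 < b -> 0 < t < 1 ->
  (pp a b > 1/2 -> ps a b t < 0) /\ (pp a b < 1/2 -> 0 < ps a b t) /\ (pp a b = 1/2 -> ps a b t = 0).
Proof.
  intros ha hb ht. split; [|split].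
  - intro hp. cut (0 < - ps a b t); [lra|].
    revert t ht. apply (barrier_strict (fun t => - ps a b t) (fun t => - ps' a b t) (AA2 a b) (fun t => - BB2 a b t)).
    + intros; apply ps_opp_der; auto.
    + rewrite ps0; ring.
    + intros t ht; rewrite ps_ode by auto; ring.
    + intros t ht. destruct (BB2_sign a b t ha hb ht) as [h _]. specialize (h hp); lra.
    + intros; apply AA2_ex; auto.
    + apply AA2_neg; auto.
  - intro hp. revert t ht. apply (barrier_strict (ps a b) (ps' a b) (AA2 a b) (BB2 a b)).
    + intros; apply ps_der; auto.
    + apply ps0.
    + intros t ht; apply ps_ode; auto.
    + intros t ht. destruct (BB2_sign a b t ha hb ht) as [_ [h _]]. auto.
    + intros; apply AA2_ex; auto.
    + apply AA2_neg; auto.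
  - intro hp.
    assert (H1 : forall t, 0 < t < 1 -> 0 <= ps a b t).
    { apply (barrier (ps a b) (ps' a b) (AA2 a b) (BB2 a b)).
      + intros; apply ps_der; auto.
      + apply ps0.
      + intros t0 ht0; apply ps_ode; auto.
      + intros t0 ht0. destruct (BB2_sign a b t0 ha hb ht0) as [_ [_ h]]. rewrite h; lra. auto.
      + intros; apply AA2_ex; auto.
      + apply AA2_neg; auto. }
    assert (H2 : forall t, 0 < t < 1 -> 0 <= - ps a b t).
    { apply (barrier (fun t => - ps a b t) (fun t => - ps' a b t) (AA2 a b) (fun t => - BB2 a b t)).
      + intros; apply ps_opp_der; auto.
      + rewrite ps0; ring.
      + intros t0 ht0; rewrite ps_ode by auto; ring.
      + intros t0 ht0. destruct (BB2_sign a b t0 ha hb ht0) as [_ [_ h]]. rewrite h; lra. auto.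
      + intros; apply AA2_ex; auto.
      + apply AA2_neg; auto. }
    specialize (H1 t ht); specialize (H2 t ht). lra.
Qed.

Lemma QQ'_sign a b t : 0 < a < 1 -> 0 < b -> 0 < t < 1 ->
  (pp a b > 1/2 -> QQ' a b t < 0) /\ (pp a b < 1/2 -> 0 < QQ' a b t) /\ (pp a b = 1/2 -> QQ' a b t = 0).
Proof.
  intros ha hb ht. rewrite QQ'_eq by auto.
  pose proof (exp_pos (- pp a b * ln (1 - t))).
  assert (0 < /(t*(1-t))) by (apply Rinv_0_lt_compat; nra).
  destruct (ps_sign a b t ha hb ht) as [h1 [h2 h3]].
  unfold Rdiv. split; [|split].
  - intro hp. specialize (h1 hp). assert (ps a b t * / (t * (1 - t)) < 0) by nra. nra.
  - intro hp. specialize (h2 hp). assert (0 < ps a b t * / (t * (1 - t))) by nra. nra.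
  - intro hp. rewrite (h3 hp). ring.
Qed.

Lemma mono_inc (Q Q' : R -> R) s t : s < t ->
  (forall c, s <= c <= t -> is_derive Q c (Q' c)) ->
  (forall c, s < c < t -> 0 < Q' c) -> Q s < Q t.
Proof.
  intros hst Hd Hn.
  destruct (MVT_cor2 Q Q' s t hst) as [c [Hc1 Hc2]].
  { intros c hc. apply is_derive_Reals. auto. }
  pose proof (Hn c Hc2). nra.
Qed.

Lemma pp_half a b : 0 < b ->
  (a - b > 1/2 -> pp a b > 1/2) /\ (a - b < 1/2 -> pp a b < 1/2) /\ (a - b = 1/2 -> pp a b = 1/2).
Proof.
  intro hb. unfold pp.
  assert (E : a / (2 * b + 1) - 1/2 = (a - b - 1/2) / (2 * b + 1)) by (field; lra).
  assert (0 < / (2*b+1)) by (apply Rinv_0_lt_compat; lra).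
  unfold Rdiv in E. split; [|split]; intro h.
  - assert (0 < (a - b - 1/2) * / (2 * b + 1)) by (apply Rmult_lt_0_compat; lra). unfold Rdiv; lra.
  - assert (0 < (1/2 - (a - b)) * / (2 * b + 1)) by (apply Rmult_lt_0_compat; lra). unfold Rdiv in *; nra.
  - unfold Rdiv. assert (a - b - 1 * / 2 = 0) by lra. rewrite H0, Rmult_0_l in E. lra.
Qed.

Lemma ineq_conv a b t : 0 < a < 1 -> 0 < b -> 0 < t < 1 ->
  hypF a b (2 * b + 1) t = Qp0 a b t * (Rpower (1 - t) (p0 a b) * hypF a (b + 1) (2 * b + 1) t)
  /\ 0 < Rpower (1 - t) (p0 a b) * hypF a (b + 1) (2 * b + 1) t.
Proof.
  intros ha hb ht.
  pose proof (gg_ge1 a b t ha hb ltac:(lra)) as Hg. unfold gg in Hg. rewrite <- hypF_PS in Hg.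
  assert (0 < Rpower (1 - t) (p0 a b)) by (unfold Rpower; apply exp_pos).
  split.
  - unfold Qp0. rewrite Rpower_Ropp. field. lra.
  - apply Rmult_lt_0_compat; lra.
Qed.

Theorem lemma3 (a b : R) (ha : 0 < a < 1) (hb : 0 < b) :
  (a - b > 1/2 ->
     forall s t, 0 < s -> s < t -> t < 1 -> Qp0 a b t < Qp0 a b s) /\
  (a - b < 1/2 ->
     forall s t, 0 < s -> s < t -> t < 1 -> Qp0 a b s < Qp0 a b t) /\
  (a - b = 1/2 -> forall t, 0 < t < 1 -> Qp0 a b t = 1) /\
  (a - b > 1/2 -> forall t, 0 < t < 1 ->
     hypF a b (2 * b + 1) t < Rpower (1 - t) (p0 a b) * hypF a (b + 1) (2 * b + 1) t) /\
  (a - b < 1/2 -> forall t, 0 < t < 1 ->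
     hypF a b (2 * b + 1) t > Rpower (1 - t) (p0 a b) * hypF a (b + 1) (2 * b + 1) t).
Proof.
  destruct (pp_half a b hb) as [P1 [P2 P3]].
  assert (Dec : forall s t, 0 <= s -> s < t -> t < 1 -> pp a b > 1/2 -> QQ a b t < QQ a b s).
  { intros s t hs hst ht hp. apply (mono_dec (QQ a b) (QQ' a b) s t hst).
    - intros c hc. apply QQ_der; auto; lra.
    - intros c hc. destruct (QQ'_sign a b c ha hb ltac:(lra)) as [h _]. auto. }
  assert (Inc : forall s t, 0 <= s -> s < t -> t < 1 -> pp a b < 1/2 -> QQ a b s < QQ a b t).
  { intros s t hs hst ht hp. apply (mono_inc (QQ a b) (QQ' a b) s t hst).
    - intros c hc. apply QQ_der; auto; lra.
    - intros c hc. destruct (QQ'_sign a b c ha hb ltac:(lra)) as [_ [h _]]. auto. }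
  split; [|split; [|split; [|split]]].
  - intros h s t hs hst ht. rewrite !Qp0_QQ. apply Dec; auto; lra.
  - intros h s t hs hst ht. rewrite !Qp0_QQ. apply Inc; auto; lra.
  - intros h t ht. rewrite Qp0_QQ, <- (QQ0 a b).
    apply (mono_const (QQ a b) (QQ' a b) 0 t); try lra.
    + intros c hc. apply QQ_der; auto; lra.
    + intros c hc. destruct (QQ'_sign a b c ha hb ltac:(lra)) as [_ [_ h']]. auto.
  - intros h t ht. destruct (ineq_conv a b t ha hb ht) as [E Hp]. rewrite E.
    assert (Qp0 a b t < 1) by (rewrite Qp0_QQ, <- (QQ0 a b); apply Dec; auto; lra). nra.
  - intros h t ht. destruct (ineq_conv a b t ha hb ht) as [E Hp]. rewrite E.
    assert (1 < Qp0 a b t) by (rewrite Qp0_QQ, <- (QQ0 a b); apply Inc; auto; lra). nra.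
Qed.
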